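(* For twisted knot diagrams $K$ with an odd number of bars, each integer $a_n(K)$ ($n\in\mathbb{Z}$), equivalently the polynomial $T_o(K)=\sum_{n\in\mathbb{Z}}a_n(K)t^n$, is invariant under generalized Reidemeister moves and twisted Reidemeister moves, hence is a twisted knot invariant.
   Context: A twisted knot diagram is a virtual knot diagram with finitely many bars on its edges; twisted knots are equivalence classes under the generalized Reidemeister moves and the twisted moves $\Omega_1^t$ (a bar passes through a virtual crossing), $\Omega_2^t$ (two adjacent bars cancel), $\Omega_3^t$ (a real crossing is replaced by the crossing with over/under exchanged and a bar added on each of its four adjacent semiarcs); the parity of the number of bars is preserved. Segments are the pieces between real crossings and bars. A coloring by $(\mathbb{Z}, a\ast b=a\circ b=a+1, f(a)=-a)$ labels segments by integers so that at each real crossing, with $x$ the label of the under-strand segment to the right of the over-strand and $y$ the label of the over-strand segment to the right of the under-strand (right with respect to strand orientations), the other under-segment is labeled $x+1$ and the other over-segment $y+1$, and labels on the two sides of a bar are negatives of each other. When the number of bars is odd this coloring exists and is unique; the index of a real crossing $c$ is then $\mathrm{Ind}(c)=y-x$. With $w(c)$ the writhe and $w(K)=\sum_c w(c)$: $a_n(K)=\sum_{\mathrm{Ind}(c)=n}w(c)$ for $n\neq0$ and $a_0(K)=\sum_{\mathrm{Ind}(c)=0}w(c)-w(K)$. *)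

(* Defs.v *)
From Stdlib Require Import ZArith List Bool Arith ClassicalEpsilon Relations.
Import ListNotations.
Open Scope Z_scope.

(* A twisted knot diagram, up to virtual moves and Omega_1^t, is encoded by
   its cyclic Gauss word: the sequence of events met when travelling along
   the (oriented) knot: a bar, passing OVER real crossing c, or passing UNDER
   real crossing c.  The crossing signs (writhes) are given by [pos]:
   [pos c = true] iff crossing c is positive.  Virtual crossings are
   invisible in this encoding. *)
Inductive event : Type := Bar | Over (c : nat) | Under (c : nat).

Definition event_eqb (e f : event) : bool :=
  match e, f with
  | Bar, Bar => true
  | Over a, Over b => Nat.eqb a b
  | Under a, Under b => Nat.eqb a b
  | _, _ => false
  end.

Record diagram : Type := mkD { word : list event; pos : nat -> bool }.

Definition overs (w : list event) : list nat :=
  flat_map (fun e => match e with Over c => [c] | _ => [] end) w.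
Definition unders (w : list event) : list nat :=
  flat_map (fun e => match e with Under c => [c] | _ => [] end) w.

Definition wf (D : diagram) : Prop :=
  NoDup (overs (word D)) /\ NoDup (unders (word D)) /\
  (forall c, In c (overs (word D)) <-> In c (unders (word D))).

Definition nbars (D : diagram) : nat :=
  length (filter (fun e => match e with Bar => true | _ => false end) (word D)).

Definition wr (D : diagram) (c : nat) : Z := if pos D c then 1 else -1.
Definition writhe (D : diagram) : Z :=
  fold_right Z.add 0 (map (wr D) (overs (word D))).

(* Segments: with L = length of the word, segment k (k < L) is the piece of
   the knot between event k and event (k+1 mod L).  The segment just before
   event k is [prevseg L k]. *)
Definition prevseg (L k : nat) : nat := ((k + L - 1) mod L)%nat.

Definition nth_ev (w : list event) (k : nat) : event := nth k w Bar.

(* Colorings by (Z, a*b = a o b = a+1, f(a) = -a).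
   At a positive crossing (over strand SW->NE, under strand SE->NW) the
   under-segment to the right of the over-strand is the incoming under
   segment, and the over-segment to the right of the under-strand is the
   outgoing over segment; at a negative crossing it is the opposite. *)
Definition is_coloring (D : diagram) (col : nat -> Z) : Prop :=
  let w := word D in
  let L := length w in
  (forall k, (k < L)%nat -> nth_ev w k = Bar -> col (prevseg L k) = - col k) /\
  (forall c i j, (i < L)%nat -> (j < L)%nat ->
     nth_ev w i = Over c -> nth_ev w j = Under c ->
     if pos D c
     then col j = col (prevseg L j) + 1 /\ col (prevseg L i) = col i + 1
     else col (prevseg L j) = col j + 1 /\ col i = col (prevseg L i) + 1).

(* "the" coloring (it exists and is unique when the number of bars is odd) *)
Definition the_coloring (D : diagram) : nat -> Z :=
  epsilon (inhabits (fun _ : nat => 0)) (is_coloring D).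

Fixpoint idx (e : event) (w : list event) : nat :=
  match w with
  | [] => 0%nat
  | x :: t => if event_eqb x e then 0%nat else S (idx e t)
  end.

Definition Ind (D : diagram) (c : nat) : Z :=
  let w := word D in
  let L := length w in
  let col := the_coloring D in
  let i := idx (Over c) w in
  let j := idx (Under c) w in
  if pos D c then col i - col (prevseg L j)
  else col (prevseg L i) - col j.

Definition a_ (D : diagram) (n : Z) : Z :=
  fold_right Z.add 0
    (map (fun c => if Z.eqb (Ind D c) n then wr D c else 0) (overs (word D)))
  - (if Z.eqb n 0 then writhe D else 0).

Definition lt_ev (o : bool) (c : nat) : event := if o then Over c else Under c.
Definition zsg (b : bool) : Z := if b then 1 else -1.
Definition pr (first : bool) (x y : event) : list event :=
  if first then [x; y] else [y; x].

Definition rename (f : nat -> nat) (e : event) : event :=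
  match e with Bar => Bar | Over c => Over (f c) | Under c => Under (f c) end.

(* Data of an R3 configuration: strands 1,2,3 with crossings a = 1/2,
   b = 1/3, c = 2/3; [oa] : strand 1 is over at a, [ob] : strand 1 over at b,
   [oc] : strand 2 over at c (heights must be a linear order).  With
   o_ij = sign det(d_i, d_j) (= writhe of the crossing if strand i is over,
   its opposite otherwise) and a side bit sg, the order of the two crossings
   along each strand is:
     strand 1: a before b  iff sg = - o13
     strand 2: a before c  iff sg = - o23
     strand 3: b before c  iff sg = - o12 o13 o23.
   R3 flips sg, i.e. reverses the three pairs. *)
Definition o12 (s : nat -> bool) (a : nat) (oa : bool) : Z :=
  if oa then zsg (s a) else - zsg (s a).

Definition strand1 (s : nat -> bool) (a b c : nat) (oa ob oc : bool) (sg : Z) : list event :=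
  pr (Z.eqb sg (- o12 s b ob)) (lt_ev oa a) (lt_ev ob b).
Definition strand2 (s : nat -> bool) (a b c : nat) (oa ob oc : bool) (sg : Z) : list event :=
  pr (Z.eqb sg (- o12 s c oc)) (lt_ev (negb oa) a) (lt_ev oc c).
Definition strand3 (s : nat -> bool) (a b c : nat) (oa ob oc : bool) (sg : Z) : list event :=
  pr (Z.eqb sg (- (o12 s a oa * o12 s b ob * o12 s c oc)))
     (lt_ev (negb ob) b) (lt_ev (negb oc) c).

Definition heights_ok (oa ob oc : bool) : Prop :=
  ~ (oa = oc /\ ob = negb oa).

Inductive step : diagram -> diagram -> Prop :=
  (* the Gauss word is cyclic *)
  | st_rot : forall p q s, step (mkD (p ++ q) s) (mkD (q ++ p) s)
  | st_rename : forall w s s' (f : nat -> nat),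
      (forall x y, f x = f y -> x = y) -> (forall c, s' (f c) = s c) ->
      step (mkD w s) (mkD (map (rename f) w) s')
  (* signs of labels not occurring are irrelevant *)
  | st_sgn : forall w s s',
      (forall c, In c (overs w) -> s c = s' c) -> step (mkD w s) (mkD w s')
  | st_R1a : forall p q a s,
      step (mkD (p ++ q) s) (mkD (p ++ [Over a; Under a] ++ q) s)
  | st_R1b : forall p q a s,
      step (mkD (p ++ q) s) (mkD (p ++ [Under a; Over a] ++ q) s)
  (* R2 (strands parallel / antiparallel) *)
  | st_R2a : forall p q r a b s, s a <> s b ->
      step (mkD (p ++ [Over a; Over b] ++ q ++ [Under a; Under b] ++ r) s)
           (mkD (p ++ q ++ r) s)
  | st_R2b : forall p q r a b s, s a <> s b ->
      step (mkD (p ++ [Over a; Over b] ++ q ++ [Under b; Under a] ++ r) s)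
           (mkD (p ++ q ++ r) s)
  (* R3 (all oriented versions) *)
  | st_R3a : forall p q r t a b c oa ob oc s sg,
      heights_ok oa ob oc -> (sg = 1 \/ sg = -1) ->
      step (mkD (p ++ strand1 s a b c oa ob oc sg ++ q ++
                 strand2 s a b c oa ob oc sg ++ r ++
                 strand3 s a b c oa ob oc sg ++ t) s)
           (mkD (p ++ strand1 s a b c oa ob oc (- sg) ++ q ++
                 strand2 s a b c oa ob oc (- sg) ++ r ++
                 strand3 s a b c oa ob oc (- sg) ++ t) s)
  | st_R3b : forall p q r t a b c oa ob oc s sg,
      heights_ok oa ob oc -> (sg = 1 \/ sg = -1) ->
      step (mkD (p ++ strand1 s a b c oa ob oc sg ++ q ++
                 strand3 s a b c oa ob oc sg ++ r ++
                 strand2 s a b c oa ob oc sg ++ t) s)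
           (mkD (p ++ strand1 s a b c oa ob oc (- sg) ++ q ++
                 strand3 s a b c oa ob oc (- sg) ++ r ++
                 strand2 s a b c oa ob oc (- sg) ++ t) s)
  | st_T2 : forall p q s,
      step (mkD (p ++ [Bar; Bar] ++ q) s) (mkD (p ++ q) s)
  (* Omega_3^t : over/under exchanged at c (chord reversed, writhe kept),
     a bar on each of the four adjacent semiarcs *)
  | st_T3 : forall p q r a s,
      step (mkD (p ++ [Over a] ++ q ++ [Under a] ++ r) s)
           (mkD (p ++ [Bar; Under a; Bar] ++ q ++ [Bar; Over a; Bar] ++ r) s).

Definition tw_step (D D' : diagram) : Prop := wf D /\ wf D' /\ step D D'.
Definition tw_equiv : diagram -> diagram -> Prop := clos_refl_sym_trans diagram tw_step.

(* Main.v *)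
Require Import Defs.
From Stdlib Require Import ZArith List Lia Bool Arith Permutation ClassicalEpsilon Relations.
Import ListNotations.
Open Scope Z_scope.

Definition tr (s : nat -> bool) (e : event) (x : Z) : Z :=
  match e with Bar => - x | Over c => x - zsg (s c) | Under c => x + zsg (s c) end.
Fixpoint T (s : nat -> bool) (w : list event) (x : Z) : Z :=
  match w with [] => x | e :: t => T s t (tr s e x) end.

Lemma T_app s u v x : T s (u ++ v) x = T s v (T s u x).
Proof. revert x; induction u; simpl; auto. Qed.

Fixpoint sgnw (w : list event) : Z :=
  match w with [] => 1 | Bar :: t => - sgnw t | _ :: t => sgnw t end.

Lemma T_lin s w : forall x, T s w x = sgnw w * x + T s w 0.
Proof.
  induction w as [|a w IH]; intros x; cbn [T sgnw]. ring.
  rewrite (IH (tr s a x)), (IH (tr s a 0)).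
  destruct a; simpl; ring.
Qed.

Definition isBar (e : event) : bool := match e with Bar => true | _ => false end.

Lemma sgnw_odd w : Nat.odd (length (filter isBar w)) = true -> sgnw w = -1.
Proof.
  assert (H : forall w, sgnw w = if Nat.odd (length (filter isBar w)) then -1 else 1).
  { induction w0 as [|a w0 IH]; simpl. reflexivity.
    destruct a; simpl; rewrite ?IH; auto.
    rewrite Nat.odd_succ, <- Nat.negb_odd.
    destruct (Nat.odd _); reflexivity. }
  intros Ho; rewrite H, Ho; reflexivity.
Qed.

Lemma overs_cons e w : overs (e :: w) = match e with Over c => [c] | _ => [] end ++ overs w.
Proof. reflexivity. Qed.
Lemma unders_cons e w : unders (e :: w) = match e with Under c => [c] | _ => [] end ++ unders w.
Proof. reflexivity. Qed.
Lemma overs_app u v : overs (u ++ v) = overs u ++ overs v.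
Proof. unfold overs; apply flat_map_app. Qed.
Lemma unders_app u v : unders (u ++ v) = unders u ++ unders v.
Proof. unfold unders; apply flat_map_app. Qed.

Definition ncr (w : list event) : nat := (length (overs w) + length (unders w))%nat.

Lemma T_parity s w : forall x, exists k, T s w x = x + Z.of_nat (ncr w) + 2 * k.
Proof.
  induction w as [|a w IH]; intros x; cbn [T].
  - exists 0; unfold ncr; cbn; ring.
  - destruct (IH (tr s a x)) as [k Hk]. rewrite Hk.
    unfold ncr in *; rewrite overs_cons, unders_cons; destruct a; cbn [tr app length] in *.
    + exists (k - x); lia.
    + unfold zsg; destruct (s c); [exists (k - 1) | exists k]; lia.
    + unfold zsg; destruct (s c); [exists k | exists (k-1)]; lia.
Qed.

Lemma wf_ncr_even D : wf D -> exists m, ncr (word D) = (2 * m)%nat.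
Proof.
  intros [H1 [H2 H3]].
  assert (Hp : Permutation (overs (word D)) (unders (word D))).
  { apply NoDup_Permutation; auto. }
  exists (length (overs (word D))). unfold ncr.
  rewrite (Permutation_length Hp). lia.
Qed.

Definition nbw (w : list event) := length (filter isBar w).

Lemma nbars_nbw D : nbars D = nbw (word D).
Proof. reflexivity. Qed.

Lemma fix_exists D : wf D -> Nat.odd (nbars D) = true ->
  exists x0, T (pos D) (word D) x0 = x0.
Proof.
  intros Hw Ho.
  destruct (wf_ncr_even D Hw) as [m Hm].
  destruct (T_parity (pos D) (word D) 0) as [k Hk].
  rewrite Hm in Hk.
  exists (Z.of_nat m + k).
  rewrite T_lin, sgnw_odd by exact Ho. rewrite Hk. lia.
Qed.

Lemma fix_unique s w x y : Nat.odd (nbw w) = true ->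
  T s w x = x -> T s w y = y -> x = y.
Proof.
  intros Ho Hx Hy. rewrite T_lin, sgnw_odd in Hx, Hy by exact Ho. lia.
Qed.
Lemma event_eqb_spec x e : event_eqb x e = true <-> x = e.
Proof.
  destruct x, e; simpl; split; intro H; try discriminate; auto;
  try (apply Nat.eqb_eq in H; subst; reflexivity);
  try (injection H; intros; subst; apply Nat.eqb_refl).
Qed.

Lemma event_eqb_refl e : event_eqb e e = true.
Proof. apply event_eqb_spec; reflexivity. Qed.

Definition event_eq_dec (x y : event) : {x = y} + {x <> y}.
Proof. decide equality; apply Nat.eq_dec. Defined.

Lemma idx_lt e w : In e w -> (idx e w < length w)%nat.
Proof.
  induction w as [|a w IH]; simpl; [tauto|]. intros [H|H].
  - subst; rewrite event_eqb_refl; lia.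
  - destruct (event_eqb a e); [lia|]. specialize (IH H); lia.
Qed.

Lemma nth_idx e w d : In e w -> nth (idx e w) w d = e.
Proof.
  induction w as [|a w IH]; simpl; [tauto|]. intros [H|H].
  - subst; rewrite event_eqb_refl; reflexivity.
  - destruct (event_eqb a e) eqn:E; [apply event_eqb_spec; auto|]. auto.
Qed.

Lemma In_over c w : In c (overs w) <-> In (Over c) w.
Proof.
  unfold overs; rewrite in_flat_map; split.
  - intros [e [He Hc]]; destruct e; simpl in Hc; try tauto.
    destruct Hc as [Hc|[]]; subst; auto.
  - intros H; exists (Over c); simpl; auto.
Qed.

Lemma In_under c w : In c (unders w) <-> In (Under c) w.
Proof.
  unfold unders; rewrite in_flat_map; split.
  - intros [e [He Hc]]; destruct e; simpl in Hc; try tauto.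
    destruct Hc as [Hc|[]]; subst; auto.
  - intros H; exists (Under c); simpl; auto.
Qed.

Lemma prevseg0 L : (0 < L)%nat -> prevseg L 0 = (L-1)%nat.
Proof. intros H; unfold prevseg; apply Nat.mod_small; lia. Qed.

Lemma prevsegS L k : (S k < L)%nat -> prevseg L (S k) = k.
Proof.
  intros H; unfold prevseg.
  replace (S k + L - 1)%nat with (k + 1 * L)%nat by lia.
  rewrite Nat.mod_add by lia. apply Nat.mod_small; lia.
Qed.

Lemma firstn_snoc (w : list event) : forall k, (k < length w)%nat ->
  firstn (S k) w = firstn k w ++ [nth k w Bar].
Proof.
  induction w as [|a w IH]; intros k Hk; simpl in *; [lia|].
  destruct k; simpl; auto.
  rewrite <- IH by lia. reflexivity.
Qed.

Definition local (D : diagram) (col : nat -> Z) : Prop :=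
  forall k, (k < length (word D))%nat ->
    col k = tr (pos D) (nth_ev (word D) k) (col (prevseg (length (word D)) k)).

Lemma local_of_col D col : wf D -> is_coloring D col -> local D col.
Proof.
  intros [_ [_ Hw]] [Hb Hc] k Hk.
  destruct (nth_ev (word D) k) eqn:E; simpl.
  - specialize (Hb k Hk E); lia.
  - assert (Hin : In (Over c) (word D)).
    { rewrite <- E; apply nth_In; auto. }
    apply In_over, Hw, In_under in Hin.
    destruct (In_nth _ _ Bar Hin) as [j [Hj Ej]].
    specialize (Hc c k j Hk Hj E Ej).
    unfold zsg; destruct (pos D c); lia.
  - assert (Hin : In (Under c) (word D)).
    { rewrite <- E; apply nth_In; auto. }
    apply In_under, Hw, In_over in Hin.
    destruct (In_nth _ _ Bar Hin) as [i [Hi Ei]].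
    specialize (Hc c i k Hi Hk Ei E).
    unfold zsg; destruct (pos D c); lia.
Qed.

Lemma col_of_local D col : local D col -> is_coloring D col.
Proof.
  intros H; split.
  - intros k Hk E. specialize (H k Hk). rewrite E in H. simpl in H. lia.
  - intros c i j Hi Hj Ei Ej.
    pose proof (H i Hi) as H1; pose proof (H j Hj) as H2.
    rewrite Ei in H1; rewrite Ej in H2; simpl in H1, H2.
    unfold zsg in *; destruct (pos D c); lia.
Qed.

Lemma local_unique D col : (0 < length (word D))%nat -> local D col ->
  forall k, (k < length (word D))%nat ->
   col k = T (pos D) (firstn (S k) (word D)) (col (length (word D) - 1)%nat).
Proof.
  intros HL Hl k; induction k as [|k IH]; intros Hk.
  - rewrite (Hl 0%nat Hk), prevseg0 by auto.
    destruct (word D) as [|e w]; simpl in *; [lia|]. reflexivity.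
  - rewrite (Hl (S k) Hk), prevsegS by auto. rewrite IH by lia.
    rewrite (firstn_snoc _ (S k)) by lia. rewrite T_app. reflexivity.
Qed.

Lemma the_coloring_eq D x0 : wf D -> Nat.odd (nbars D) = true ->
  T (pos D) (word D) x0 = x0 ->
  forall k, (k < length (word D))%nat ->
    the_coloring D k = T (pos D) (firstn (S k) (word D)) x0.
Proof.
  intros Hw Ho Hx.
  assert (HL : (0 < length (word D))%nat).
  { destruct (word D) eqn:E; [|simpl; lia]. unfold nbars in Ho. rewrite E in Ho. discriminate. }
  set (mycol := fun k => T (pos D) (firstn (S k) (word D)) x0).
  assert (Hm : local D mycol).
  { intros k Hk. unfold mycol. destruct k.
    - rewrite prevseg0 by auto. replace (S (length (word D) - 1)) with (length (word D)) by lia.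
      rewrite firstn_all, Hx. destruct (word D); simpl in *; [lia|]. reflexivity.
    - rewrite prevsegS by auto. rewrite (firstn_snoc _ (S k)) by lia. rewrite T_app. reflexivity. }
  assert (Hc : is_coloring D (the_coloring D)).
  { unfold the_coloring. apply epsilon_spec. exists mycol. apply col_of_local; auto. }
  pose proof (local_of_col D _ Hw Hc) as Hl.
  pose proof (local_unique D _ HL Hl) as Hu.
  set (y := the_coloring D (length (word D) - 1)%nat) in Hu.
  assert (Hy : T (pos D) (word D) y = y).
  { pose proof (Hu (length (word D) - 1)%nat ltac:(lia)) as H.
    replace (S (length (word D) - 1)) with (length (word D)) in H by lia.
    rewrite firstn_all in H. fold y in H. auto. }
  assert (y = x0) by (eapply fix_unique; eauto).
  intros k Hk. rewrite Hu by auto. fold y. subst; reflexivity.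
Qed.

Definition bc s w x e := T s (firstn (idx e w) w) x.

Definition IndB s w x0 c := bc s w x0 (Over c) - bc s w x0 (Under c) - zsg (s c).

Lemma Ind_bc D x0 c : wf D -> Nat.odd (nbars D) = true ->
  T (pos D) (word D) x0 = x0 -> In c (overs (word D)) ->
  Ind D c = IndB (pos D) (word D) x0 c.
Proof.
  intros Hw Ho Hx Hc.
  assert (HL : (0 < length (word D))%nat).
  { destruct (word D) eqn:E; [|simpl; lia]. unfold nbars in Ho. rewrite E in Ho. discriminate. }
  assert (Hi : In (Over c) (word D)) by (apply In_over; auto).
  assert (Hj : In (Under c) (word D)).
  { apply In_under. destruct Hw as [_ [_ H]]. apply H; auto. }
  pose proof (idx_lt _ _ Hi) as Hil. pose proof (idx_lt _ _ Hj) as Hjl.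
  pose proof (nth_idx _ _ Bar Hi) as Ei. pose proof (nth_idx _ _ Bar Hj) as Ej.
  assert (Hprev : forall i, (i < length (word D))%nat ->
     the_coloring D (prevseg (length (word D)) i) = T (pos D) (firstn i (word D)) x0).
  { intros i Hi'. destruct i.
    - rewrite prevseg0 by auto. rewrite (the_coloring_eq D x0) by (auto; lia).
      replace (S (length (word D) - 1)) with (length (word D)) by lia.
      rewrite firstn_all, Hx. reflexivity.
    - rewrite prevsegS by auto. apply the_coloring_eq; auto; lia. }
  unfold Ind, IndB, bc. cbv zeta.
  rewrite !Hprev by auto. rewrite !(the_coloring_eq D x0) by auto.
  rewrite !firstn_snoc by auto. rewrite !T_app. rewrite Ei, Ej. simpl.
  unfold zsg; destruct (pos D c); lia.
Qed.
Definition sumZ (l : list Z) : Z := fold_right Z.add 0 l.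
Definition hval (n i v : Z) : Z := (if i =? n then v else 0) - (if n =? 0 then v else 0).
Definition hB n s w x0 c := hval n (IndB s w x0 c) (zsg (s c)).

Lemma sumZ_app l1 l2 : sumZ (l1 ++ l2) = sumZ l1 + sumZ l2.
Proof. induction l1; simpl; [reflexivity|]. unfold sumZ in *; simpl. lia. Qed.

Lemma sumZ_perm l1 l2 : Permutation l1 l2 -> sumZ l1 = sumZ l2.
Proof. induction 1; unfold sumZ in *; simpl; lia. Qed.

Lemma perm_sum {A} (l l' : list A) f g : Permutation l l' ->
  (forall c, In c l -> f c = g c) -> sumZ (map f l) = sumZ (map g l').
Proof.
  intros Hp He. rewrite (map_ext_in f g l He). apply sumZ_perm, Permutation_map; auto.
Qed.

Lemma a_hB D x0 n : wf D -> Nat.odd (nbars D) = true ->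
  T (pos D) (word D) x0 = x0 ->
  a_ D n = sumZ (map (hB n (pos D) (word D) x0) (overs (word D))).
Proof.
  intros Hw Ho Hx. unfold a_, writhe.
  assert (H : forall l, (forall c, In c l -> In c (overs (word D))) ->
    fold_right Z.add 0 (map (fun c => if Ind D c =? n then wr D c else 0) l) -
    (if n =? 0 then fold_right Z.add 0 (map (wr D) l) else 0) =
    sumZ (map (hB n (pos D) (word D) x0) l)).
  { induction l as [|c l IH]; intros Hl.
    - simpl. destruct (n =? 0); reflexivity.
    - simpl. rewrite <- IH by (intros; apply Hl; simpl; auto).
      unfold hB, hval. rewrite <- (Ind_bc D x0 c) by (auto; apply Hl; simpl; auto).
      unfold wr, zsg. destruct (n =? 0); lia. }
  apply H; auto.
Qed.

Definition wfw (w : list event) : Prop := NoDup (overs w) /\ NoDup (unders w).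

Lemma wf_wfw D : wf D -> wfw (word D).
Proof. intros [a [b _]]; split; auto. Qed.

Lemma nodup_ev w u e v : wfw w -> w = u ++ e :: v -> e <> Bar -> ~ In e u /\ ~ In e v.
Proof.
  intros [Ho Hu] -> Hb. destruct e as [|c|c]; [congruence| |].
  - rewrite overs_app, overs_cons in Ho. simpl in Ho.
    apply NoDup_remove_2 in Ho. rewrite in_app_iff, !In_over in Ho. tauto.
  - rewrite unders_app, unders_cons in Hu. simpl in Hu.
    apply NoDup_remove_2 in Hu. rewrite in_app_iff, !In_under in Hu. tauto.
Qed.

Lemma nodup_split p q e : wfw (p ++ q) -> e <> Bar -> In e p -> ~ In e q.
Proof.
  intros Hw Hb Hp. destruct (in_split _ _ Hp) as [p1 [p2 ->]].
  rewrite <- app_assoc in Hw. simpl in Hw.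
  destruct (nodup_ev _ _ _ _ Hw eq_refl Hb) as [_ H]. rewrite in_app_iff in H. tauto.
Qed.

Lemma bc_cons_eq s e v x : bc s (e :: v) x e = x.
Proof. unfold bc; simpl; rewrite event_eqb_refl; reflexivity. Qed.

Lemma bc_app_in s u v x e : In e u -> bc s (u ++ v) x e = bc s u x e.
Proof.
  unfold bc; revert x; induction u as [|a u IH]; intros x H; simpl in *; [tauto|].
  destruct (event_eqb a e) eqn:E; simpl; auto.
  apply IH. destruct H; auto. subst; rewrite event_eqb_refl in E; discriminate.
Qed.

Lemma bc_app_nin s u v x e : ~ In e u -> bc s (u ++ v) x e = bc s v (T s u x) e.
Proof.
  unfold bc; revert x; induction u as [|a u IH]; intros x H; simpl in *; auto.
  destruct (event_eqb a e) eqn:E.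
  - apply event_eqb_spec in E; tauto.
  - simpl. apply IH. tauto.
Qed.

Lemma bc_at s u e v x : ~ In e u -> bc s (u ++ e :: v) x e = T s u x.
Proof. intros H; rewrite bc_app_nin by auto. apply bc_cons_eq. Qed.

Lemma bc_at_eq s w u e v x : wfw w -> w = u ++ e :: v -> e <> Bar -> bc s w x e = T s u x.
Proof.
  intros Hw Hd Hb. destruct (nodup_ev _ _ _ _ Hw Hd Hb) as [H _]. subst; apply bc_at; auto.
Qed.

Lemma T_repl s p X X' q x : (forall y, T s X y = T s X' y) ->
  T s (p ++ X ++ q) x = T s (p ++ X' ++ q) x.
Proof. intros H. rewrite !T_app, H. reflexivity. Qed.

Lemma bc_repl s p X X' q x e : (forall y, T s X y = T s X' y) -> ~ In e X -> ~ In e X' ->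
  bc s (p ++ X ++ q) x e = bc s (p ++ X' ++ q) x e.
Proof.
  intros H H1 H2. destruct (in_dec event_eq_dec e p).
  - rewrite !bc_app_in by auto. reflexivity.
  - rewrite !bc_app_nin by auto. rewrite H. reflexivity.
Qed.

Lemma IndB_repl s p X X' q x c : (forall y, T s X y = T s X' y) ->
  ~ In (Over c) X -> ~ In (Under c) X -> ~ In (Over c) X' -> ~ In (Under c) X' ->
  IndB s (p ++ X ++ q) x c = IndB s (p ++ X' ++ q) x c.
Proof.
  intros. unfold IndB. rewrite (bc_repl s p X X' q x (Over c)), (bc_repl s p X X' q x (Under c)) by auto.
  reflexivity.
Qed.

Lemma frame D D' n : wf D -> wf D' -> Nat.odd (nbars D) = true -> Nat.odd (nbars D') = true ->
  (forall x0, T (pos D) (word D) x0 = x0 -> exists x0', T (pos D') (word D') x0' = x0' /\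
     sumZ (map (hB n (pos D) (word D) x0) (overs (word D))) =
     sumZ (map (hB n (pos D') (word D') x0') (overs (word D')))) ->
  a_ D n = a_ D' n.
Proof.
  intros Hw Hw' Ho Ho' H.
  destruct (fix_exists D Hw Ho) as [x0 Hx].
  destruct (H x0 Hx) as [x0' [Hx' He]].
  rewrite (a_hB D x0), (a_hB D' x0'); auto.
Qed.
Ltac lnorm := simpl; repeat (rewrite <- ?app_assoc; simpl); try reflexivity.

Lemma bc_rot s p q x0 e : wfw (p ++ q) -> e <> Bar -> In e (p ++ q) ->
  T s (p ++ q) x0 = x0 -> bc s (p ++ q) x0 e = bc s (q ++ p) (T s p x0) e.
Proof.
  intros Hw Hb Hi Hx. destruct (in_dec event_eq_dec e p) as [Hp|Hp].
  - rewrite bc_app_in by auto. rewrite bc_app_nin by (eapply nodup_split; eauto).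
    rewrite <- T_app, Hx. reflexivity.
  - rewrite bc_app_nin by auto. rewrite bc_app_in; auto.
    apply in_app_or in Hi; tauto.
Qed.

Lemma mv_rot p q s n : wf (mkD (p ++ q) s) -> wf (mkD (q ++ p) s) ->
  Nat.odd (nbars (mkD (p ++ q) s)) = true -> Nat.odd (nbars (mkD (q ++ p) s)) = true ->
  a_ (mkD (p ++ q) s) n = a_ (mkD (q ++ p) s) n.
Proof.
  intros Hw Hw' Ho Ho'. apply frame; auto. simpl. intros x0 Hx.
  exists (T s p x0). split.
  - rewrite T_app, <- (T_app s p q), Hx. reflexivity.
  - apply perm_sum. rewrite !overs_app; apply Permutation_app_comm.
    intros c Hc. unfold hB, IndB. pose proof (wf_wfw _ Hw) as Hw2; simpl in Hw2.
    rewrite (bc_rot s p q x0 (Over c)), (bc_rot s p q x0 (Under c)); auto; try discriminate.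
    + apply In_under. destruct Hw as [_ [_ H]]. simpl in H. apply H; auto.
    + apply In_over; auto.
Qed.

Lemma T_rename s s' f w x : (forall c, s' (f c) = s c) ->
  T s' (map (rename f) w) x = T s w x.
Proof.
  intros Hs; revert x; induction w as [|a w IH]; intros x; simpl; auto.
  rewrite <- IH. f_equal. destruct a; simpl; rewrite ?Hs; reflexivity.
Qed.

Lemma idx_rename f w e : (forall x y, f x = f y -> x = y) ->
  idx (rename f e) (map (rename f) w) = idx e w.
Proof.
  intros Hf; induction w as [|a w IH]; simpl; auto.
  assert (E : event_eqb (rename f a) (rename f e) = event_eqb a e).
  { destruct (event_eqb a e) eqn:E1.
    - apply event_eqb_spec in E1; subst; apply event_eqb_refl.
    - destruct (event_eqb (rename f a) (rename f e)) eqn:E2; auto.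
      apply event_eqb_spec in E2. rewrite <- E1. symmetry. apply event_eqb_spec.
      destruct a, e; simpl in E2; try discriminate; injection E2; intros; f_equal; auto. }
  rewrite E, IH. reflexivity.
Qed.

Lemma bc_rename s s' f w x e : (forall x y, f x = f y -> x = y) -> (forall c, s' (f c) = s c) ->
  bc s' (map (rename f) w) x (rename f e) = bc s w x e.
Proof.
  intros Hf Hs. unfold bc. rewrite idx_rename by auto. rewrite firstn_map.
  apply T_rename; auto.
Qed.

Lemma overs_rename f w : overs (map (rename f) w) = map f (overs w).
Proof.
  induction w as [|a w IH]; cbn [map]; auto.
  rewrite !overs_cons, IH. destruct a; reflexivity.
Qed.

Lemma nbw_rename f w : nbw (map (rename f) w) = nbw w.
Proof.
  unfold nbw; induction w as [|a w IH]; simpl; auto. destruct a; simpl; auto.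
Qed.

Lemma mv_rename w s s' f n : (forall x y, f x = f y -> x = y) -> (forall c, s' (f c) = s c) ->
  wf (mkD w s) -> wf (mkD (map (rename f) w) s') ->
  Nat.odd (nbars (mkD w s)) = true -> Nat.odd (nbars (mkD (map (rename f) w) s')) = true ->
  a_ (mkD w s) n = a_ (mkD (map (rename f) w) s') n.
Proof.
  intros Hf Hs Hw Hw' Ho Ho'. apply frame; auto. simpl. intros x0 Hx.
  exists x0. split. rewrite (T_rename s s' f); auto.
  rewrite overs_rename, map_map. f_equal. apply map_ext. intros c.
  unfold hB, IndB. rewrite Hs. f_equal.
  change (Over (f c)) with (rename f (Over c)). change (Under (f c)) with (rename f (Under c)).
  rewrite !(bc_rename s s' f); auto.
Qed.

Lemma T_ext s s' u x : (forall c, In (Over c) u \/ In (Under c) u -> s c = s' c) ->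
  T s u x = T s' u x.
Proof.
  revert x; induction u as [|a u IH]; intros x H; simpl; auto.
  assert (E : tr s a x = tr s' a x).
  { destruct a; simpl; auto; rewrite (H c); simpl; auto. }
  rewrite E. apply IH. intros c [Hc|Hc]; apply H; simpl; auto.
Qed.

Lemma firstn_in {A} k (u : list A) y : In y (firstn k u) -> In y u.
Proof.
  revert u; induction k; intros u H; simpl in *; [tauto|].
  destruct u; simpl in *; auto. destruct H; auto.
Qed.

Lemma mv_sgn w s s' n : (forall c, In c (overs w) -> s c = s' c) ->
  wf (mkD w s) -> wf (mkD w s') ->
  Nat.odd (nbars (mkD w s)) = true -> Nat.odd (nbars (mkD w s')) = true ->
  a_ (mkD w s) n = a_ (mkD w s') n.
Proof.
  intros Hs Hw Hw' Ho Ho'. apply frame; auto. simpl. intros x0 Hx.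
  assert (Hc : forall c, In (Over c) w \/ In (Under c) w -> s c = s' c).
  { intros c [H|H]; apply Hs.
    - apply In_over; auto.
    - destruct Hw as [_ [_ Hw]]; simpl in Hw. apply Hw, In_under; auto. }
  exists x0. split. rewrite <- (T_ext s s'); auto.
  f_equal. apply map_ext_in. intros c Hi. unfold hB, IndB, bc.
  rewrite (Hs c Hi). rewrite !(T_ext s s' (firstn _ w)); auto;
  intros d [H|H]; apply Hc; [left|right|left|right]; eapply firstn_in; eauto.
Qed.

Lemma sum_insert (f g : nat -> Z) l1 l2 a : (forall c, In c (l1 ++ l2) -> f c = g c) -> g a = 0 ->
  sumZ (map f (l1 ++ l2)) = sumZ (map g (l1 ++ a :: l2)).
Proof.
  intros H Ha. rewrite (map_ext_in f g _ H). rewrite !map_app, !sumZ_app. cbn [map].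
  change (sumZ (g a :: map g l2)) with (g a + sumZ (map g l2)). lia.
Qed.

Lemma hval0 n v : hval n 0 v = 0.
Proof. unfold hval. rewrite Z.eqb_sym. destruct (n =? 0); lia. Qed.

Lemma mv_R1 p q a s n (X : list event) :
  (X = [Over a; Under a] \/ X = [Under a; Over a]) ->
  wf (mkD (p ++ q) s) -> wf (mkD (p ++ X ++ q) s) ->
  Nat.odd (nbars (mkD (p ++ q) s)) = true -> Nat.odd (nbars (mkD (p ++ X ++ q) s)) = true ->
  a_ (mkD (p ++ q) s) n = a_ (mkD (p ++ X ++ q) s) n.
Proof.
  intros HX Hw Hw' Ho Ho'. apply frame; auto. simpl. intros x0 Hx.
  assert (HT : forall y, T s [] y = T s X y).
  { intros y; destruct HX; subst; simpl; lia. }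
  exists x0. split.
  { rewrite <- (T_repl s p [] X q x0 HT). exact Hx. }
  assert (Ho2 : overs (p ++ X ++ q) = overs p ++ a :: overs q).
  { destruct HX; subst; rewrite !overs_app; reflexivity. }
  pose proof (wf_wfw _ Hw') as Hw2; simpl in Hw2.
  assert (Hna : ~ In a (overs p ++ overs q)).
  { destruct Hw2 as [H _]. rewrite Ho2 in H. apply NoDup_remove_2 in H; auto. }
  rewrite Ho2, overs_app. apply sum_insert.
  - intros c Hc. unfold hB. f_equal.
    change (p ++ q) with (p ++ [] ++ q). apply IndB_repl; auto; simpl; try tauto;
    destruct HX; subst; simpl; intros [E|[E|[]]]; try discriminate; injection E; intros; subst; tauto.
  - unfold hB. replace (IndB s (p ++ X ++ q) x0 a) with 0. apply hval0.
    unfold IndB. destruct HX; subst.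
    + rewrite (bc_at_eq s _ p (Over a) (Under a :: q) x0), (bc_at_eq s _ (p ++ [Over a]) (Under a) q x0);
      auto; try discriminate; try lnorm. rewrite T_app; simpl; lia.
    + rewrite (bc_at_eq s _ p (Under a) (Over a :: q) x0), (bc_at_eq s _ (p ++ [Under a]) (Over a) q x0);
      auto; try discriminate; try lnorm. rewrite T_app; simpl; lia.
Qed.

Lemma mv_T2 p q s n : wf (mkD (p ++ [Bar; Bar] ++ q) s) -> wf (mkD (p ++ q) s) ->
  Nat.odd (nbars (mkD (p ++ [Bar; Bar] ++ q) s)) = true -> Nat.odd (nbars (mkD (p ++ q) s)) = true ->
  a_ (mkD (p ++ [Bar; Bar] ++ q) s) n = a_ (mkD (p ++ q) s) n.
Proof.
  intros Hw Hw' Ho Ho'. apply frame; auto. cbn [word pos]. intros x0 Hx.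
  assert (HT : forall y, T s [Bar; Bar] y = T s [] y) by (intros; simpl; lia).
  exists x0. split.
  { change (p ++ q) with (p ++ [] ++ q). rewrite <- (T_repl s p _ _ q x0 HT). exact Hx. }
  assert (Ho2 : overs (p ++ [Bar; Bar] ++ q) = overs (p ++ q)).
  { rewrite !overs_app; reflexivity. }
  rewrite Ho2. f_equal. apply map_ext_in. intros c _. unfold hB. f_equal.
  change (p ++ q) with (p ++ [] ++ q). apply IndB_repl; auto; simpl; intuition discriminate.
Qed.
Lemma T_repl2 s p X1 X1' q X2 X2' r x : (forall y, T s X1 y = T s X1' y) ->
  (forall y, T s X2 y = T s X2' y) ->
  T s (p ++ X1 ++ q ++ X2 ++ r) x = T s (p ++ X1' ++ q ++ X2' ++ r) x.
Proof. intros H1 H2. rewrite !T_app, H1, H2. reflexivity. Qed.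

Lemma T_repl3 s p X1 X1' q X2 X2' r X3 X3' t x : (forall y, T s X1 y = T s X1' y) ->
  (forall y, T s X2 y = T s X2' y) -> (forall y, T s X3 y = T s X3' y) ->
  T s (p ++ X1 ++ q ++ X2 ++ r ++ X3 ++ t) x = T s (p ++ X1' ++ q ++ X2' ++ r ++ X3' ++ t) x.
Proof. intros H1 H2 H3. rewrite !T_app, H1, H2, H3. reflexivity. Qed.

Definition notin_c c (X : list event) := ~ In (Over c) X /\ ~ In (Under c) X.

Lemma IndB_repl2 s p X1 X1' q X2 X2' r x c : (forall y, T s X1 y = T s X1' y) ->
  (forall y, T s X2 y = T s X2' y) ->
  notin_c c X1 -> notin_c c X1' -> notin_c c X2 -> notin_c c X2' ->
  IndB s (p ++ X1 ++ q ++ X2 ++ r) x c = IndB s (p ++ X1' ++ q ++ X2' ++ r) x c.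
Proof.
  intros H1 H2 [A1 B1] [A2 B2] [A3 B3] [A4 B4].
  rewrite (IndB_repl s p X1 X1' (q ++ X2 ++ r)) by auto.
  replace (p ++ X1' ++ q ++ X2 ++ r) with ((p ++ X1' ++ q) ++ X2 ++ r) by (rewrite <- !app_assoc; reflexivity).
  replace (p ++ X1' ++ q ++ X2' ++ r) with ((p ++ X1' ++ q) ++ X2' ++ r) by (rewrite <- !app_assoc; reflexivity).
  apply IndB_repl; auto.
Qed.

Lemma IndB_repl3 s p X1 X1' q X2 X2' r X3 X3' t x c : (forall y, T s X1 y = T s X1' y) ->
  (forall y, T s X2 y = T s X2' y) -> (forall y, T s X3 y = T s X3' y) ->
  notin_c c X1 -> notin_c c X1' -> notin_c c X2 -> notin_c c X2' -> notin_c c X3 -> notin_c c X3' ->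
  IndB s (p ++ X1 ++ q ++ X2 ++ r ++ X3 ++ t) x c = IndB s (p ++ X1' ++ q ++ X2' ++ r ++ X3' ++ t) x c.
Proof.
  intros H1 H2 H3 N1 N2 N3 N4 [A5 B5] [A6 B6].
  rewrite (IndB_repl2 s p X1 X1' q X2 X2' (r ++ X3 ++ t)) by auto.
  replace (p ++ X1' ++ q ++ X2' ++ r ++ X3 ++ t) with ((p ++ X1' ++ q ++ X2' ++ r) ++ X3 ++ t) by (rewrite <- !app_assoc; reflexivity).
  replace (p ++ X1' ++ q ++ X2' ++ r ++ X3' ++ t) with ((p ++ X1' ++ q ++ X2' ++ r) ++ X3' ++ t) by (rewrite <- !app_assoc; reflexivity).
  apply IndB_repl; auto.
Qed.

Lemma hval_opp n i v : hval n i v + hval n i (- v) = 0.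
Proof. unfold hval. destruct (i =? n), (n =? 0); lia. Qed.

Lemma sum_remove2 (f g : nat -> Z) l1 l2 a b : (forall c, In c (l1 ++ l2) -> f c = g c) ->
  f a + f b = 0 ->
  sumZ (map f (l1 ++ a :: b :: l2)) = sumZ (map g (l1 ++ l2)).
Proof.
  intros H Ha. rewrite <- (map_ext_in f g _ H). rewrite !map_app, !sumZ_app. cbn [map].
  change (sumZ (f a :: f b :: map f l2)) with (f a + (f b + sumZ (map f l2))). lia.
Qed.

Ltac notin_tac := split; simpl; intros HH; repeat destruct HH as [HH|HH]; try tauto;
  try discriminate; injection HH; intros; subst; tauto.

Lemma mv_R2 p q r a b s n X2 : s a <> s b ->
  (X2 = [Under a; Under b] \/ X2 = [Under b; Under a]) ->
  wf (mkD (p ++ [Over a; Over b] ++ q ++ X2 ++ r) s) -> wf (mkD (p ++ q ++ r) s) ->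
  Nat.odd (nbars (mkD (p ++ [Over a; Over b] ++ q ++ X2 ++ r) s)) = true ->
  Nat.odd (nbars (mkD (p ++ q ++ r) s)) = true ->
  a_ (mkD (p ++ [Over a; Over b] ++ q ++ X2 ++ r) s) n = a_ (mkD (p ++ q ++ r) s) n.
Proof.
  intros Hs HX Hw Hw' Ho Ho'. apply frame; auto. cbn [word pos]. intros x0 Hx.
  assert (Hz : zsg (s a) + zsg (s b) = 0).
  { unfold zsg; destruct (s a), (s b); try lia; congruence. }
  assert (HT1 : forall y, T s [Over a; Over b] y = T s [] y) by (intros; simpl; lia).
  assert (HT2 : forall y, T s X2 y = T s [] y) by (intros; destruct HX; subst; simpl; lia).
  exists x0. split.
  { change (p ++ q ++ r) with (p ++ [] ++ q ++ [] ++ r).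
    rewrite <- (T_repl2 s p _ _ q _ _ r x0 HT1 HT2). exact Hx. }
  assert (Ho2 : overs (p ++ [Over a; Over b] ++ q ++ X2 ++ r) = overs p ++ a :: b :: overs q ++ overs r).
  { destruct HX; subst; rewrite !overs_app; reflexivity. }
  pose proof (wf_wfw _ Hw) as Hw2; cbn [word] in Hw2.
  assert (Hna : ~ In a (overs p ++ overs q ++ overs r) /\ ~ In b (overs p ++ overs q ++ overs r) /\ a <> b).
  { destruct Hw2 as [H _]. rewrite Ho2 in H.
    pose proof (NoDup_remove_2 _ _ _ H) as H1. apply NoDup_remove_1 in H.
    apply NoDup_remove_2 in H. rewrite !in_app_iff in *. simpl in H1. intuition. }
  destruct Hna as [Hna [Hnb Hab]].
  rewrite Ho2, !overs_app. apply sum_remove2.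
  - intros c Hc. unfold hB. f_equal.
    assert (c <> a) by (intro; subst; tauto). assert (c <> b) by (intro; subst; tauto).
    change (p ++ q ++ r) with (p ++ [] ++ q ++ [] ++ r).
    apply IndB_repl2; auto; try (split; simpl; tauto);
      try (destruct HX; subst); notin_tac.
  - unfold hB.
    replace (IndB s (p ++ [Over a; Over b] ++ q ++ X2 ++ r) x0 b)
      with (IndB s (p ++ [Over a; Over b] ++ q ++ X2 ++ r) x0 a).
    + replace (zsg (s b)) with (- zsg (s a)) by lia. apply hval_opp.
    + unfold IndB.
      assert (Hw3 : wfw (p ++ [Over a; Over b] ++ q ++ X2 ++ r)) by exact Hw2.
      rewrite (bc_at_eq s _ p (Over a) (Over b :: q ++ X2 ++ r) x0 Hw3) by (try discriminate; lnorm).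
      rewrite (bc_at_eq s _ (p ++ [Over a]) (Over b) (q ++ X2 ++ r) x0 Hw3) by (try discriminate; lnorm).
      destruct HX; subst.
      * rewrite (bc_at_eq s _ (p ++ [Over a; Over b] ++ q) (Under a) (Under b :: r) x0 Hw3) by (try discriminate; lnorm).
        rewrite (bc_at_eq s _ (p ++ [Over a; Over b] ++ q ++ [Under a]) (Under b) r x0 Hw3) by (try discriminate; lnorm).
        rewrite !T_app. simpl. lia.
      * rewrite (bc_at_eq s _ (p ++ [Over a; Over b] ++ q) (Under b) (Under a :: r) x0 Hw3) by (try discriminate; lnorm).
        rewrite (bc_at_eq s _ (p ++ [Over a; Over b] ++ q ++ [Under b]) (Under a) r x0 Hw3) by (try discriminate; lnorm).
        rewrite !T_app. simpl. lia.
Qed.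

Lemma mv_T3 p q r a s n :
  wf (mkD (p ++ [Over a] ++ q ++ [Under a] ++ r) s) ->
  wf (mkD (p ++ [Bar; Under a; Bar] ++ q ++ [Bar; Over a; Bar] ++ r) s) ->
  Nat.odd (nbars (mkD (p ++ [Over a] ++ q ++ [Under a] ++ r) s)) = true ->
  Nat.odd (nbars (mkD (p ++ [Bar; Under a; Bar] ++ q ++ [Bar; Over a; Bar] ++ r) s)) = true ->
  a_ (mkD (p ++ [Over a] ++ q ++ [Under a] ++ r) s) n =
  a_ (mkD (p ++ [Bar; Under a; Bar] ++ q ++ [Bar; Over a; Bar] ++ r) s) n.
Proof.
  intros Hw Hw' Ho Ho'. apply frame; auto. cbn [word pos]. intros x0 Hx.
  assert (HT1 : forall y, T s [Over a] y = T s [Bar; Under a; Bar] y) by (intros; simpl; lia).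
  assert (HT2 : forall y, T s [Under a] y = T s [Bar; Over a; Bar] y) by (intros; simpl; lia).
  exists x0. split.
  { rewrite <- (T_repl2 s p _ _ q _ _ r x0 HT1 HT2). exact Hx. }
  assert (Ho2 : overs (p ++ [Over a] ++ q ++ [Under a] ++ r) = overs p ++ a :: overs q ++ overs r).
  { rewrite !overs_app; reflexivity. }
  assert (Ho3 : overs (p ++ [Bar; Under a; Bar] ++ q ++ [Bar; Over a; Bar] ++ r) = overs p ++ overs q ++ a :: overs r).
  { rewrite !overs_app; reflexivity. }
  pose proof (wf_wfw _ Hw) as Hw2; cbn [word] in Hw2.
  pose proof (wf_wfw _ Hw') as Hw3; cbn [word] in Hw3.
  assert (Hna : ~ In a (overs p ++ overs q ++ overs r)).
  { destruct Hw2 as [H _]. rewrite Ho2 in H. apply NoDup_remove_2 in H. auto. }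
  rewrite Ho2, Ho3. apply perm_sum.
  - apply Permutation_app_head. apply Permutation_middle.
  - intros c Hc. unfold hB. f_equal.
    destruct (Nat.eq_dec c a) as [->|Hca].
    + unfold IndB.
      rewrite (bc_at_eq s _ p (Over a) (q ++ [Under a] ++ r) x0 Hw2) by (try discriminate; lnorm).
      rewrite (bc_at_eq s _ (p ++ [Over a] ++ q) (Under a) r x0 Hw2) by (try discriminate; lnorm).
      rewrite (bc_at_eq s _ (p ++ [Bar; Under a; Bar] ++ q ++ [Bar]) (Over a) (Bar :: r) x0 Hw3) by (try discriminate; lnorm).
      rewrite (bc_at_eq s _ (p ++ [Bar]) (Under a) (Bar :: q ++ [Bar; Over a; Bar] ++ r) x0 Hw3) by (try discriminate; lnorm).
      rewrite !T_app. simpl. rewrite (T_lin s q (- _)), (T_lin s q (_ - _)). lia.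
    + apply IndB_repl2; auto; notin_tac.
Qed.
Lemma In_pr f (X Y e : event) : In e (pr f X Y) <-> e = X \/ e = Y.
Proof. destruct f; simpl; intuition. Qed.

Lemma lt_ev_nb o x : lt_ev o x <> Bar.
Proof. destruct o; discriminate. Qed.

Lemma T_pr s f X Y y : X <> Bar -> Y <> Bar -> T s (pr f X Y) y = tr s Y (tr s X y).
Proof. intros HX HY. destruct X, Y, f; simpl; try congruence; lia. Qed.

Lemma bc_pr1 s w u f X Y v x : wfw w -> w = u ++ pr f X Y ++ v -> X <> Bar -> Y <> Bar ->
  bc s w x X = if f then T s u x else tr s Y (T s u x).
Proof.
  intros Hw -> HX HY. destruct f; simpl.
  - apply (bc_at_eq s _ u X (Y :: v)); auto.
  - rewrite (bc_at_eq s _ (u ++ [Y]) X v x); auto. rewrite T_app; reflexivity.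
    rewrite <- app_assoc; reflexivity.
Qed.

Lemma bc_pr2 s w u f X Y v x : wfw w -> w = u ++ pr f X Y ++ v -> X <> Bar -> Y <> Bar ->
  bc s w x Y = if f then tr s X (T s u x) else T s u x.
Proof.
  intros Hw -> HX HY. destruct f; simpl.
  - rewrite (bc_at_eq s _ (u ++ [X]) Y v x); auto. rewrite T_app; reflexivity.
    rewrite <- app_assoc; reflexivity.
  - apply (bc_at_eq s _ u Y (X :: v)); auto.
Qed.

Lemma R3_core s a b c oa ob oc sg w w' x0 x0' u1 v1 u2 v2 u3 v3 u1' v1' u2' v2' u3' v3' d :
  (sg = 1 \/ sg = -1) -> wfw w -> wfw w' ->
  w = u1 ++ strand1 s a b c oa ob oc sg ++ v1 ->
  w = u2 ++ strand2 s a b c oa ob oc sg ++ v2 ->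
  w = u3 ++ strand3 s a b c oa ob oc sg ++ v3 ->
  w' = u1' ++ strand1 s a b c oa ob oc (- sg) ++ v1' ->
  w' = u2' ++ strand2 s a b c oa ob oc (- sg) ++ v2' ->
  w' = u3' ++ strand3 s a b c oa ob oc (- sg) ++ v3' ->
  T s u1 x0 = T s u1' x0' -> T s u2 x0 = T s u2' x0' -> T s u3 x0 = T s u3' x0' ->
  (d = a \/ d = b \/ d = c) -> IndB s w x0 d = IndB s w' x0' d.
Proof.
  intros Hsg Hw Hw' E1 E2 E3 E1' E2' E3' T1 T2 T3 Hd.
  unfold strand1, strand2, strand3 in *.
  pose proof (bc_pr1 s _ _ _ _ _ _ x0 Hw E1 (lt_ev_nb _ _) (lt_ev_nb _ _)) as H1.
  pose proof (bc_pr2 s _ _ _ _ _ _ x0 Hw E1 (lt_ev_nb _ _) (lt_ev_nb _ _)) as H2.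
  pose proof (bc_pr1 s _ _ _ _ _ _ x0 Hw E2 (lt_ev_nb _ _) (lt_ev_nb _ _)) as H3.
  pose proof (bc_pr2 s _ _ _ _ _ _ x0 Hw E2 (lt_ev_nb _ _) (lt_ev_nb _ _)) as H4.
  pose proof (bc_pr1 s _ _ _ _ _ _ x0 Hw E3 (lt_ev_nb _ _) (lt_ev_nb _ _)) as H5.
  pose proof (bc_pr2 s _ _ _ _ _ _ x0 Hw E3 (lt_ev_nb _ _) (lt_ev_nb _ _)) as H6.
  pose proof (bc_pr1 s _ _ _ _ _ _ x0' Hw' E1' (lt_ev_nb _ _) (lt_ev_nb _ _)) as H1'.
  pose proof (bc_pr2 s _ _ _ _ _ _ x0' Hw' E1' (lt_ev_nb _ _) (lt_ev_nb _ _)) as H2'.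
  pose proof (bc_pr1 s _ _ _ _ _ _ x0' Hw' E2' (lt_ev_nb _ _) (lt_ev_nb _ _)) as H3'.
  pose proof (bc_pr2 s _ _ _ _ _ _ x0' Hw' E2' (lt_ev_nb _ _) (lt_ev_nb _ _)) as H4'.
  pose proof (bc_pr1 s _ _ _ _ _ _ x0' Hw' E3' (lt_ev_nb _ _) (lt_ev_nb _ _)) as H5'.
  pose proof (bc_pr2 s _ _ _ _ _ _ x0' Hw' E3' (lt_ev_nb _ _) (lt_ev_nb _ _)) as H6'.
  rewrite <- T1 in H1', H2'. rewrite <- T2 in H3', H4'. rewrite <- T3 in H5', H6'.
  clear E1 E2 E3 E1' E2' E3' T1 T2 T3 Hw Hw'.
  generalize dependent (T s u1 x0). generalize dependent (T s u2 x0).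
  generalize dependent (T s u3 x0). intros P3 H5 H6 H5' H6' P2 H3 H4 H3' H4' P1 H1 H2 H1' H2'.
  unfold IndB, o12 in *.
  destruct Hd as [ -> | [ -> | -> ] ];
  destruct oa, ob, oc; cbn [lt_ev negb tr] in *;
  destruct (s a), (s b), (s c); destruct Hsg as [->| ->]; cbn in *; lia.
Qed.
Lemma perm_pr f g X Y : Permutation (overs (pr f X Y)) (overs (pr g X Y)).
Proof.
  assert (H : Permutation (overs [X; Y]) (overs [Y; X])).
  { rewrite !overs_cons. change (overs []) with (@nil nat). rewrite !app_nil_r.
    apply Permutation_app_comm. }
  destruct f, g; simpl; auto. symmetry; auto.
Qed.

Lemma T_strand1 s a b c oa ob oc sg sg' y :
  T s (strand1 s a b c oa ob oc sg) y = T s (strand1 s a b c oa ob oc sg') y.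
Proof. unfold strand1. rewrite !T_pr by apply lt_ev_nb. reflexivity. Qed.
Lemma T_strand2 s a b c oa ob oc sg sg' y :
  T s (strand2 s a b c oa ob oc sg) y = T s (strand2 s a b c oa ob oc sg') y.
Proof. unfold strand2. rewrite !T_pr by apply lt_ev_nb. reflexivity. Qed.
Lemma T_strand3 s a b c oa ob oc sg sg' y :
  T s (strand3 s a b c oa ob oc sg) y = T s (strand3 s a b c oa ob oc sg') y.
Proof. unfold strand3. rewrite !T_pr by apply lt_ev_nb. reflexivity. Qed.

Lemma notin_pr d f o1 x1 o2 x2 : d <> x1 -> d <> x2 -> notin_c d (pr f (lt_ev o1 x1) (lt_ev o2 x2)).
Proof.
  intros H1 H2. split; rewrite In_pr; destruct o1, o2; simpl; intros [H|H]; congruence.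
Qed.

Ltac r3_common s a b c oa ob oc sg Hw Hw' :=
  apply frame; auto; cbn [word pos]; intros x0 Hx;
  assert (HT1 : forall sg1 sg2 y, T s (strand1 s a b c oa ob oc sg1) y = T s (strand1 s a b c oa ob oc sg2) y)
    by (intros; apply T_strand1);
  assert (HT2 : forall sg1 sg2 y, T s (strand2 s a b c oa ob oc sg1) y = T s (strand2 s a b c oa ob oc sg2) y)
    by (intros; apply T_strand2);
  assert (HT3 : forall sg1 sg2 y, T s (strand3 s a b c oa ob oc sg1) y = T s (strand3 s a b c oa ob oc sg2) y)
    by (intros; apply T_strand3);
  exists x0; split;
  [ rewrite !T_app, (HT1 (-sg) sg), (HT2 (-sg) sg), (HT3 (-sg) sg), <- !T_app; exact Hx
  | apply perm_sum;
    [ rewrite !overs_app; unfold strand1, strand2, strand3;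
      repeat apply Permutation_app; auto; apply perm_pr
    | intros d Hd; unfold hB; f_equal;
      pose proof (wf_wfw _ Hw) as Hw2; pose proof (wf_wfw _ Hw') as Hw3;
      cbn [word] in Hw2, Hw3 ] ].

Lemma mv_R3a p q r t a b c oa ob oc s sg n : (sg = 1 \/ sg = -1) ->
  let w := p ++ strand1 s a b c oa ob oc sg ++ q ++ strand2 s a b c oa ob oc sg ++ r ++
           strand3 s a b c oa ob oc sg ++ t in
  let w' := p ++ strand1 s a b c oa ob oc (- sg) ++ q ++ strand2 s a b c oa ob oc (- sg) ++ r ++
           strand3 s a b c oa ob oc (- sg) ++ t in
  wf (mkD w s) -> wf (mkD w' s) -> Nat.odd (nbars (mkD w s)) = true -> Nat.odd (nbars (mkD w' s)) = true ->
  a_ (mkD w s) n = a_ (mkD w' s) n.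
Proof.
  intros Hsg w w' Hw Hw' Ho Ho'. unfold w, w' in *.
  r3_common s a b c oa ob oc sg Hw Hw'.
  destruct (Nat.eq_dec d a) as [Ha|Ha]; [|destruct (Nat.eq_dec d b) as [Hb|Hb];
    [|destruct (Nat.eq_dec d c) as [Hc|Hc]]].
  1-3: eapply (R3_core s a b c oa ob oc sg _ _ x0 x0 p _ (p ++ strand1 s a b c oa ob oc sg ++ q) _
        (p ++ strand1 s a b c oa ob oc sg ++ q ++ strand2 s a b c oa ob oc sg ++ r) _
        p _ (p ++ strand1 s a b c oa ob oc (-sg) ++ q) _
        (p ++ strand1 s a b c oa ob oc (-sg) ++ q ++ strand2 s a b c oa ob oc (-sg) ++ r)); eauto;
       try (rewrite <- !app_assoc; reflexivity);
       try (rewrite !T_app, ?(HT1 sg (-sg)), ?(HT2 sg (-sg)); reflexivity).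
  apply IndB_repl3; auto; unfold strand1, strand2, strand3; apply notin_pr; auto.
Qed.

Lemma mv_R3b p q r t a b c oa ob oc s sg n : (sg = 1 \/ sg = -1) ->
  let w := p ++ strand1 s a b c oa ob oc sg ++ q ++ strand3 s a b c oa ob oc sg ++ r ++
           strand2 s a b c oa ob oc sg ++ t in
  let w' := p ++ strand1 s a b c oa ob oc (- sg) ++ q ++ strand3 s a b c oa ob oc (- sg) ++ r ++
           strand2 s a b c oa ob oc (- sg) ++ t in
  wf (mkD w s) -> wf (mkD w' s) -> Nat.odd (nbars (mkD w s)) = true -> Nat.odd (nbars (mkD w' s)) = true ->
  a_ (mkD w s) n = a_ (mkD w' s) n.
Proof.
  intros Hsg w w' Hw Hw' Ho Ho'. unfold w, w' in *.
  r3_common s a b c oa ob oc sg Hw Hw'.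
  destruct (Nat.eq_dec d a) as [Ha|Ha]; [|destruct (Nat.eq_dec d b) as [Hb|Hb];
    [|destruct (Nat.eq_dec d c) as [Hc|Hc]]].
  1-3: eapply (R3_core s a b c oa ob oc sg _ _ x0 x0 p _ 
        (p ++ strand1 s a b c oa ob oc sg ++ q ++ strand3 s a b c oa ob oc sg ++ r) _
        (p ++ strand1 s a b c oa ob oc sg ++ q) _
        p _ 
        (p ++ strand1 s a b c oa ob oc (-sg) ++ q ++ strand3 s a b c oa ob oc (-sg) ++ r) _
        (p ++ strand1 s a b c oa ob oc (-sg) ++ q)); eauto;
       try (rewrite <- !app_assoc; reflexivity);
       try (rewrite !T_app, ?(HT1 sg (-sg)), ?(HT3 sg (-sg)); reflexivity).
  apply IndB_repl3; auto; unfold strand1, strand2, strand3; apply notin_pr; auto.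
Qed.
Lemma nbw_app u v : nbw (u ++ v) = (nbw u + nbw v)%nat.
Proof. unfold nbw. rewrite filter_app, length_app. reflexivity. Qed.

Lemma nbw_pr f o1 x1 o2 x2 : nbw (pr f (lt_ev o1 x1) (lt_ev o2 x2)) = 0%nat.
Proof. destruct f, o1, o2; reflexivity. Qed.

Lemma nbars_mk w s : nbars (mkD w s) = nbw w.
Proof. reflexivity. Qed.

Lemma odd_shift X Y k : X = (Y + 2 * k)%nat -> Nat.odd X = Nat.odd Y.
Proof. intros ->; apply Nat.odd_add_mul_2. Qed.

Ltac par_tac := first [ apply (odd_shift _ _ 0); lia | apply (odd_shift _ _ 1); lia
  | apply (odd_shift _ _ 2); lia | symmetry; apply (odd_shift _ _ 1); lia
  | symmetry; apply (odd_shift _ _ 2); lia ].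

Lemma step_parity D D' : step D D' -> Nat.odd (nbars D) = Nat.odd (nbars D').
Proof.
  intros H; destruct H; rewrite !nbars_mk, ?nbw_app; unfold strand1, strand2, strand3;
    rewrite ?nbw_pr; cbn [nbw filter isBar length].
  2: rewrite nbw_rename; reflexivity.
  all: try reflexivity; par_tac.
Qed.

Lemma step_inv D D' : tw_step D D' ->
  Nat.odd (nbars D) = Nat.odd (nbars D') /\
  (Nat.odd (nbars D) = true -> forall n, a_ D n = a_ D' n).
Proof.
  intros [Hw [Hw' Hs]]. pose proof (step_parity _ _ Hs) as Hp. split; auto.
  intros Ho n. assert (Ho' : Nat.odd (nbars D') = true) by congruence.
  destruct Hs.
  - apply mv_rot; auto.
  - apply mv_rename; auto.
  - apply mv_sgn; auto.
  - eapply mv_R1; [left; reflexivity|auto..].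
  - eapply mv_R1; [right; reflexivity|auto..].
  - eapply mv_R2; [assumption|left; reflexivity|auto..].
  - eapply mv_R2; [assumption|right; reflexivity|auto..].
  - apply mv_R3a; auto.
  - apply mv_R3b; auto.
  - apply mv_T2; auto.
  - apply mv_T3; auto.
Qed.

Lemma equiv_inv K K' : tw_equiv K K' ->
  Nat.odd (nbars K) = Nat.odd (nbars K') /\
  (Nat.odd (nbars K) = true -> forall n, a_ K n = a_ K' n).
Proof.
  induction 1 as [x y Hs | x | x y Hxy [IH1 IH2] | x y z Hxy [IH1 IH2] Hyz [IH3 IH4]].
  - apply step_inv; auto.
  - split; auto.
  - split; auto. intros Hy n. symmetry. apply IH2. congruence.
  - split; [congruence|]. intros Hx n. rewrite IH2 by auto. apply IH4. congruence.
Qed.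

Theorem theorem7p4 (K K' : diagram) :
  wf K -> Nat.odd (nbars K) = true -> tw_equiv K K' ->
  forall n : Z, a_ K n = a_ K' n.
Proof.
  intros _ Ho H. apply (equiv_inv K K' H); auto.
Qed.
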